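(* For $\theta>0$ and $1\le q<\infty$, the small Lebesgue sequence space $l^{q)',\theta}$ is a Banach space.
   Context: Let $X$ be one of $\mathbb N,\mathbb N_0,\mathbb Z$. For $\theta>0$ and $1\le q<\infty$, the small Lebesgue sequence space $l^{q)',\theta}$ is the space of all sequences $y=\{y_k\}_{k\in X}$ such that $$\|y\|_{l^{q)',\theta}}:=\inf\Big\{\sum_{j\in X}\inf_{\varepsilon>0}\varepsilon^{\frac{-\theta}{q(1+\varepsilon)}}\Big(\sum_{k\in X}y_{k,j}^{(q(1+\varepsilon))'}\Big)^{\frac{1}{(q(1+\varepsilon))'}}\Big\}<\infty,$$ where the outer infimum is over all decompositions $|y_k|=\sum_{j\in X}y_{k,j}$ ($k\in X$) with all $y_{k,j}\ge0$, and $(q(1+\varepsilon))'$ is the conjugate exponent of $q(1+\varepsilon)$. *)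

(* Defs.v *)
From HB Require Import structures.
From mathcomp Require Import all_boot all_order all_algebra.
From mathcomp Require Import all_classical all_reals.
From mathcomp Require Import ereal topology normedtype sequences esum exp.

Set Implicit Arguments.
Unset Strict Implicit.
Unset Printing Implicit Defensive.
Import Order.TTheory GRing.Theory Num.Theory.
Local Open Scope classical_set_scope.
Local Open Scope ring_scope.

Definition conj_exp {R : realType} (p : R) : R := p / (p - 1).

(* For a fixed column j of a decomposition D (D k j = y_{k,j}):
   inf_{eps>0} eps^{-theta/(q(1+eps))} (sum_k y_{k,j}^{(q(1+eps))'})^{1/(q(1+eps))'} *)
Definition small_leb_column {R : realType} {I : choiceType}
  (theta q : R) (D : I -> I -> R) (j : I) : \bar R :=
  ereal_inf [set
    ((eps `^ (- theta / (q * (1 + eps))))%:E *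
      poweR (\esum_(k in [set: I]) ((D k j) `^ (conj_exp (q * (1 + eps))))%:E)
            (conj_exp (q * (1 + eps)))^-1)%E
    | eps in [set e : R | 0 < e]].

Definition small_leb_decomp {R : realType} {I : choiceType}
  (y : I -> R) (D : I -> I -> R) : Prop :=
  (forall k j, 0 <= D k j) /\
  (forall k, (`|y k|)%:E = \esum_(j in [set: I]) (D k j)%:E).

Definition small_leb_norm {R : realType} {I : choiceType}
  (theta q : R) (y : I -> R) : \bar R :=
  ereal_inf [set \esum_(j in [set: I]) small_leb_column theta q D j
            | D in [set D | small_leb_decomp y D]].

(* "the space {y | N y < +oo} equipped with N is a (real) Banach space":
   a linear subspace of the sequences, on which N is a norm, and complete. *)
Definition banach_seq_space {R : realType} {I : choiceType}
  (N : (I -> R) -> \bar R) : Prop :=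
  let V := [set y : I -> R | (N y < +oo)%E] in
  V (fun _ => 0) /\
  (forall y z, V y -> V z -> V (fun k => y k + z k)) /\
  (forall (c : R) y, V y -> V (fun k => c * y k)) /\
  (forall y, V y -> (0 <= N y)%E) /\
  (forall y, V y -> (N y = 0%E <-> y = (fun _ => 0))) /\
  (forall (c : R) y, V y -> N (fun k => c * y k) = (`|c|%:E * N y)%E) /\
  (forall y z, V y -> V z -> (N (fun k => (y k + z k)%R) <= N y + N z)%E) /\
  (forall u : nat -> I -> R, (forall n, V (u n)) ->
     (forall e : R, 0 < e -> exists n0 : nat, forall m n : nat,
        (n0 <= m)%N -> (n0 <= n)%N -> (N (fun k => (u m k - u n k)%R) < e%:E)%E) ->
     exists y, V y /\
       (forall e : R, 0 < e -> exists n0 : nat, forall n : nat,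
        (n0 <= n)%N -> (N (fun k => (u n k - y k)%R) < e%:E)%E)).

(* Main.v *)
Require Import Defs.
From HB Require Import structures.
From mathcomp Require Import all_boot all_order all_algebra.
From mathcomp Require Import all_classical all_reals.
From mathcomp Require Import ereal topology normedtype sequences esum exp.
From mathcomp Require Import lra.
Import Order.TTheory GRing.Theory Num.Theory.
Import numFieldNormedType.Exports.
Local Open Scope ring_scope.
Local Open Scope classical_set_scope.

Lemma esumZ (R : realType) (T : choiceType) (S : set T) (a : T -> \bar R) (c : R) :
  0 <= c -> (forall i, (0 <= a i)%E) ->
  (\esum_(i in S) (c%:E * a i) = c%:E * \esum_(i in S) a i)%E.
Proof.
move=> c0 a0; have [->|cn0] := eqVneq c 0.
  by rewrite mul0e esum1// => i _; rewrite mul0e.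
have cp : 0 < c by rewrite lt0r cn0.
rewrite /esum -ereal_sup_pZl// image_comp /=; congr ereal_sup.
by apply: eq_imagel => A _ /=; rewrite ge0_mule_fsumr.
Qed.

Definition pe {R : realType} (q e : R) : R := conj_exp (q * (1 + e)).

Definition term {R : realType} {I : choiceType} (theta q : R) (v : I -> R) (e : R) : \bar R :=
  ((e `^ (- theta / (q * (1 + e))))%:E *
      poweR (\esum_(k in [set: I]) ((v k) `^ (pe q e))%:E) (pe q e)^-1)%E.

Definition col {R : realType} {I : choiceType} (theta q : R) (v : I -> R) : \bar R :=
  ereal_inf [set term theta q v e | e in [set e : R | 0 < e]].

Lemma colE (R : realType) (I : choiceType) (theta q : R) (D : I -> I -> R) j :
  small_leb_column theta q D j = col theta q (fun k => D k j).
Proof. by []. Qed.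

Lemma pe_gt0 (R : realType) (q e : R) : 1 <= q -> 0 < e -> 0 < pe q e.
Proof.
move=> q1 e0; rewrite /pe /conj_exp.
have h : 1 < q * (1 + e).
  rewrite (le_lt_trans q1)// -[ltLHS]mulr1 ltr_pM2l ?ltrDl//.
  by rewrite (lt_le_trans _ q1).
by rewrite divr_gt0 ?subr_gt0// (lt_trans _ h).
Qed.
Arguments pe_gt0 {R q e}.

Lemma term_ge0 (R : realType) (I : choiceType) (theta q : R) v e :
  (0 <= term (I:=I) theta q v e)%E.
Proof. by rewrite mule_ge0// ?lee_fin ?powR_ge0// poweR_ge0. Qed.

Lemma col_ge0 (R : realType) (I : choiceType) (theta q : R) v :
  (0 <= col (I:=I) theta q v)%E.
Proof. by apply/ereal_infP => _ [e _ <-]; exact: term_ge0. Qed.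

Lemma term_mono (R : realType) (I : choiceType) (theta q : R) (v w : I -> R) e :
  1 <= q -> 0 < e -> (forall k, 0 <= v k <= w k) ->
  (term theta q v e <= term theta q w e)%E.
Proof.
move=> q1 e0 vw; rewrite /term lee_wpmul2l ?lee_fin ?powR_ge0//.
have pp := pe_gt0 q1 e0.
have Hle : (\esum_(k in [set: I]) (v k `^ pe q e)%:E <=
   \esum_(k in [set: I]) (w k `^ pe q e)%:E)%E.
  apply: le_esum => k _; rewrite lee_fin; have /andP[v0 vw'] := vw k.
  have wk : w k \is Num.nneg by rewrite nnegrE (le_trans v0).
  have vk : v k \is Num.nneg by rewrite nnegrE.
  exact: (ge0_ler_powR (ltW pp) vk wk vw').
apply: (gt0_ler_poweR _ _ _ Hle); rewrite ?invr_ge0 ?ltW//.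
- by rewrite in_itv/= leey andbT; apply: esum_ge0 => k _; rewrite lee_fin powR_ge0.
- by rewrite in_itv/= leey andbT; apply: esum_ge0 => k _; rewrite lee_fin powR_ge0.
Qed.
Arguments term_mono {R I} theta {q v w e}.

Lemma col_mono (R : realType) (I : choiceType) (theta q : R) (v w : I -> R) :
  1 <= q -> (forall k, 0 <= v k <= w k) ->
  (col theta q v <= col theta q w)%E.
Proof.
move=> q1 vw; apply/ereal_infP => _ [e e0 <-].
apply: le_trans (term_mono theta q1 e0 vw).
by apply: ereal_inf_lbound; exists e.
Qed.

Lemma col0 (R : realType) (I : choiceType) (theta q : R) :
  1 <= q -> col (I:=I) theta q (fun _ => 0) = 0%E.
Proof.
move=> q1; apply/eqP; rewrite eq_le col_ge0 andbT.
apply: ereal_inf_lbound; exists 1 => //=.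
rewrite /term esum1 ?poweR0r ?mule0// ?invr_neq0 ?gt_eqF ?pe_gt0//.
by move=> k _; rewrite powR0// gt_eqF// pe_gt0.
Qed.

Lemma termZ (R : realType) (I : choiceType) (theta q : R) (v : I -> R) (l e : R) :
  1 <= q -> 0 < e -> 0 < l -> (forall k, 0 <= v k) ->
  term theta q (fun k => l * v k) e = (l%:E * term theta q v e)%E.
Proof.
move=> q1 e0 l0 v0; have pp := pe_gt0 (q:=q) q1 e0.
rewrite /term.
have -> : (\esum_(k in [set: I]) ((l * v k) `^ pe q e)%:E =
   (l `^ pe q e)%:E * \esum_(k in [set: I]) (v k `^ pe q e)%:E)%E.
  rewrite -esumZ ?powR_ge0//; last by move=> k; rewrite lee_fin powR_ge0.
  by apply: eq_esum => k _; rewrite powRM ?v0 ?(ltW l0).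
rewrite poweRM ?lee_fin ?powR_ge0//; last by apply: esum_ge0 => k _; rewrite lee_fin powR_ge0.
rewrite poweR_EFin -powRrM mulfV ?gt_eqF// powRr1 ?ltW//.
by rewrite muleCA.
Qed.

Lemma colZ (R : realType) (I : choiceType) (theta q : R) (v : I -> R) (l : R) :
  1 <= q -> 0 < l -> (forall k, 0 <= v k) ->
  col theta q (fun k => l * v k) = (l%:E * col theta q v)%E.
Proof.
move=> q1 l0 v0; rewrite /col -ereal_inf_pZl// image_comp; congr ereal_inf.
by apply: eq_imagel => e e0 /=; rewrite termZ.
Qed.

Lemma powR_lb (R : realType) (theta q e : R) :
  0 <= theta -> 1 <= q -> 0 < e ->
  expR (- (theta / q)) <= e `^ (- theta / (q * (1 + e))).
Proof.
move=> th0 q1 e0; rewrite /powR gt_eqF// ler_expR.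
have q0 : 0 < q by rewrite (lt_le_trans _ q1).
have e1 : 0 < 1 + e by rewrite addr_gt0.
have -> : - theta / (q * (1 + e)) = - ((theta / q) / (1 + e)).
  by rewrite invfM mulrA !mulNr.
rewrite mulNr lerN2.
have hln : ln e <= 1 + e.
  have := expR_ge1Dx (ln e); rewrite lnK ?posrE// => h; lra.
have a0 : 0 <= theta / q / (1 + e) := divr_ge0 (divr_ge0 th0 (ltW q0)) (ltW e1).
apply: le_trans (ler_wpM2l a0 hln) _.
by rewrite divfK ?gt_eqF.
Qed.

Lemma colLB (R : realType) (I : choiceType) (theta q : R) (v : I -> R) k :
  0 <= theta -> 1 <= q -> (forall k, 0 <= v k) ->
  ((expR (- (theta / q)) * v k)%:E <= col theta q v)%E.
Proof.
move=> th0 q1 v0; apply/ereal_infP => _ [e e0 <-].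
have pp := pe_gt0 (q:=q) q1 e0.
rewrite /term EFinM; apply: lee_pmul; rewrite ?lee_fin ?expR_ge0 ?v0 ?powR_lb//.
have Hle : ((v k `^ pe q e)%:E <= \esum_(k in [set: I]) (v k `^ pe q e)%:E)%E.
  apply: esum_ge; exists [set k]; first by split => //; exact: finite_set1.
  by rewrite fsbig_set1.
have -> : ((v k)%:E = poweR ((v k `^ pe q e)%:E) (pe q e)^-1)%E.
  by rewrite poweR_EFin -powRrM mulfV ?gt_eqF// powRr1.
apply: (gt0_ler_poweR _ _ _ Hle); rewrite ?invr_ge0 ?ltW//.
- by rewrite in_itv/= leey andbT lee_fin powR_ge0.
- by rewrite in_itv/= leey andbT; apply: esum_ge0 => k' _; rewrite lee_fin powR_ge0.
Qed.

Lemma esum_reindex (R : realType) (I : choiceType) (phi : nat * I -> I)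
  (psi : I -> option (nat * I)) (g : nat * I -> \bar R) :
  pcancel phi psi -> ocancel psi phi -> (forall p, (0 <= g p)%E) ->
  \esum_(j in [set: I]) (match psi j with Some p => g p | None => 0%E end) =
  \esum_(p in [set: nat * I]) g p.
Proof.
move=> pc oc g0.
have inj : set_inj [set: nat * I] phi by move=> a b _ _; exact: (pcan_inj pc).
rewrite -[RHS](eq_esum (a := fun p => match psi (phi p) with Some p => g p | None => 0%E end)); last first.
  by move=> p _; rewrite pc.
rewrite -(esum_image _ _ (fun j => match psi j with Some p => g p | None => 0%E end) inj).
rewrite [RHS]esum_mkcond; apply: eq_esum => j _.
case: ifPn => // /negP jn.
case E: (psi j) => [p|//].
exfalso; apply: jn; rewrite inE; exists p => //.
by have := oc j; rewrite E.
Qed.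

Lemma esum_fubini (R : realType) (I : choiceType) (g : nat * I -> \bar R) :
  (forall p, (0 <= g p)%E) ->
  \esum_(p in [set: nat * I]) g p =
  \esum_(i in [set: nat]) \esum_(j in [set: I]) g (i, j).
Proof.
move=> g0; rewrite (esum_esum (I:=[set: nat]) (J:=fun _ => [set: I]) (a:=fun i j => g (i, j))); last first.
  by move=> *; exact: g0.
have -> : [set: nat] `*`` (fun _ => [set: I]) = [set: nat * I].
  by apply/seteqP; split => -[].
by apply: eq_esum => [[]].
Qed.

Lemma N_ge0 (R : realType) (I : choiceType) (theta q : R) (y : I -> R) :
  (0 <= small_leb_norm theta q y)%E.
Proof.
apply/ereal_infP => _ [D _ <-]; apply: esum_ge0 => j _; exact: col_ge0.
Qed.

Lemma N_abs (R : realType) (I : choiceType) (theta q : R) (y z : I -> R) :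
  (forall k, `|y k| = `|z k|) ->
  small_leb_norm theta q y = small_leb_norm theta q z.
Proof.
move=> yz; rewrite /small_leb_norm; congr ereal_inf.
apply/seteqP; split => _ [D [D0 HD] <-]; exists D => //; split => // k.
  by rewrite -yz.
by rewrite yz.
Qed.

Lemma N0 (R : realType) (I : choiceType) (theta q : R) :
  1 <= q -> small_leb_norm (I:=I) theta q (fun _ => 0) = 0%E.
Proof.
move=> q1; apply/eqP; rewrite eq_le N_ge0 andbT.
apply: ereal_inf_lbound; exists (fun _ _ => 0).
  split => // k; rewrite normr0 esum1//.
by apply: esum1 => j _; rewrite colE col0.
Qed.

Lemma N_LB (R : realType) (I : choiceType) (theta q : R) (y : I -> R) k :
  0 <= theta -> 1 <= q ->
  ((expR (- (theta / q)) * `|y k|)%:E <= small_leb_norm theta q y)%E.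
Proof.
move=> th0 q1; apply/ereal_infP => _ [D [D0 HD] <-].
rewrite EFinM HD -esumZ ?expR_ge0//; last by move=> j; rewrite lee_fin.
apply: le_esum => j _; rewrite colE -EFinM.
exact: (@colLB R I theta q (fun k => D k j) k th0 q1 (fun k' => D0 k' j)).
Qed.

Lemma N_Zle (R : realType) (I : choiceType) (theta q : R) (y : I -> R) (l : R) :
  1 <= q -> 0 < l ->
  (small_leb_norm theta q (fun k => (l * y k)%R) <= l%:E * small_leb_norm theta q y)%E.
Proof.
move=> q1 l0; rewrite -lee_pdivrMl//; apply/ereal_infP => _ [D [D0 HD] <-].
rewrite lee_pdivrMl//; apply: ereal_inf_lbound; exists (fun k j => l * D k j).
  split => [k j|k]; first exact: mulr_ge0 (ltW l0) (D0 k j).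
  rewrite normrM gtr0_norm// EFinM HD -esumZ ?ltW//; last by move=> j; rewrite lee_fin.
rewrite -esumZ ?ltW//; last by move=> j; exact: col_ge0.
by apply: eq_esum => j _; rewrite !colE colZ.
Qed.

Lemma N_Z (R : realType) (I : choiceType) (theta q : R) (y : I -> R) (l : R) :
  1 <= q -> 0 < l ->
  small_leb_norm theta q (fun k => (l * y k)%R) = (l%:E * small_leb_norm theta q y)%E.
Proof.
move=> q1 l0; apply/eqP; rewrite eq_le N_Zle//=.
have li : 0 < l^-1 by rewrite invr_gt0.
have h := @N_Zle R I theta q (fun k => (l * y k)%R) l^-1 q1 li.
rewrite (_ : (fun k => l^-1 * (l * y k)) = y) in h; last first.
  by apply/funext => k; rewrite mulKf ?gt_eqF.
by rewrite -lee_pdivlMl.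
Qed.

Lemma CS (R : realType) (I : choiceType) (theta q : R) (phi : nat * I -> I)
  (psi : I -> option (nat * I)) (y : I -> R) (w : nat -> I -> R) :
  pcancel phi psi -> ocancel psi phi -> 0 <= theta -> 1 <= q ->
  (forall k, (`|y k|%:E <= \esum_(i in [set: nat]) (`|w i k|)%:E)%E) ->
  (small_leb_norm theta q y <= \esum_(i in [set: nat]) small_leb_norm theta q (w i))%E.
Proof.
move=> pc oc th0 q1 Hy.
set T := \esum_(i in [set: nat]) small_leb_norm theta q (w i).
have T0 : (0 <= T)%E by apply: esum_ge0 => i _; exact: N_ge0.
have [Ty|Tny] := eqVneq T +oo%E; first by rewrite Ty leey.
have Tfin : T \is a fin_num by rewrite ge0_fin_numE// lt_neqAle Tny leey.
have Nle i : (small_leb_norm theta q (w i) <= T)%E.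
  apply: esum_ge; exists [set i]; first by split => //; exact: finite_set1.
  by rewrite fsbig_set1.
have Nfin i : small_leb_norm theta q (w i) \is a fin_num.
  by rewrite ge0_fin_numE ?N_ge0// (le_lt_trans (Nle i))// lt_neqAle Tny leey.
apply/lee_addgt0Pr => delta delta0.
pose d i := delta / (2 ^ i.+1)%:R.
have d0 i : 0 < d i by rewrite divr_gt0// ltr0n expn_gt0.
have exD i : exists D, small_leb_decomp (w i) D /\
    (\esum_(j in [set: I]) small_leb_column theta q D j <
     small_leb_norm theta q (w i) + (d i)%:E)%E.
  have : (small_leb_norm theta q (w i) < small_leb_norm theta q (w i) + (d i)%:E)%E.
    by rewrite lteDl// lte_fin.
  by move/ereal_inf_lt => [_ [D HD <-] lt]; exists D.
have [Df HDf] := choice exD.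
pose c := expR (- (theta / q)).
have c0 : 0 < c := expR_gt0 _.
pose S k := \esum_(i in [set: nat]) (`|w i k|)%:E.
have SE k : S k = \esum_(i in [set: nat]) \esum_(j in [set: I]) (Df i k j)%:E.
  by apply: eq_esum => i _; rewrite (HDf i).1.2.
have Sfin k : S k \is a fin_num.
  have H : (S k <= c^-1%:E * T)%E.
    rewrite /T -esumZ; [|by rewrite invr_ge0 ltW|by move=> i; exact: N_ge0].
    rewrite /S; apply: le_esum => i _; rewrite lee_pdivlMl// -EFinM; exact: N_LB.
  rewrite ge0_fin_numE; last by apply: esum_ge0 => i _; rewrite lee_fin.
  by apply: le_lt_trans H _; rewrite ltey_eq fin_numM.
pose s k := fine (S k).
have SEs k : S k = (s k)%:E by rewrite fineK.
have s0 k : 0 <= s k by rewrite fine_ge0// esum_ge0// => i _; rewrite lee_fin.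
have ys k : `|y k| <= s k by rewrite -lee_fin -SEs; exact: Hy.
pose lam k := if s k == 0 then 0 else `|y k| / s k.
have lam0 k : 0 <= lam k by rewrite /lam; case: ifP => // _; rewrite divr_ge0.
have lam1 k : lam k <= 1.
  rewrite /lam; case: ifPn => // sn0.
  by rewrite ler_pdivrMr ?mul1r// lt0r sn0 s0.
have lams k : lam k * s k = `|y k|.
  rewrite /lam; case: ifPn => [/eqP s_eq0|sn0]; last by rewrite divfK.
  have := ys k; rewrite s_eq0 mul0r => h.
  by apply/eqP; rewrite eq_sym eq_le h normr_ge0.
pose D' k j := match psi j with Some p => lam k * Df p.1 k p.2 | None => 0 end.
have Df0 i k j : 0 <= Df i k j by exact: (HDf i).1.1.
apply: (@le_trans _ _ (\esum_(j in [set: I]) small_leb_column theta q D' j)).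
  apply: ereal_inf_lbound; exists D' => //; split.
    by move=> k j; rewrite /D'; case: (psi j) => [p|//]; rewrite mulr_ge0.
  move=> k; rewrite -lams EFinM -SEs SE.
  rewrite (eq_esum (b := fun j => match psi j with Some p => (lam k * Df p.1 k p.2)%:E | None => 0%E end)); last first.
    by move=> j _; rewrite /D'; case: (psi j).
  rewrite (@esum_reindex R I phi psi _ pc oc)//; last by move=> p; rewrite lee_fin mulr_ge0.
  rewrite (eq_esum (b := fun p => ((lam k)%:E * (Df p.1 k p.2)%:E)%E)); last first.
    by move=> p _; rewrite EFinM.
  rewrite esumZ//; last by move=> p; rewrite lee_fin.
  by rewrite esum_fubini// => p; rewrite lee_fin.
rewrite (eq_esum (a := fun j => small_leb_column theta q D' j) (b := fun j => match psi j with Some p => col theta q (fun k => lam k * Df p.1 k p.2) | None => 0%E end)); last first.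
  by move=> j _; rewrite colE /D'; case: (psi j) => [p|] //; exact: col0.
rewrite (@esum_reindex R I phi psi _ pc oc)//; last by move=> p; exact: col_ge0.
apply: (@le_trans _ _ (\esum_(p in [set: nat * I]) col theta q (fun k => Df p.1 k p.2))).
  apply: le_esum => p _; apply: col_mono => // k.
  by rewrite mulr_ge0//= ler_piMl.
rewrite esum_fubini//; last by move=> p; exact: col_ge0.
apply: (@le_trans _ _ (\esum_(i in [set: nat]) (small_leb_norm theta q (w i) + (d i)%:E)%E)).
  by apply: le_esum => i _; apply: ltW; exact: (HDf i).2.
rewrite /T -!nneseries_esumT.
- by apply: epsilon_trick => //; [move=> i; exact: N_ge0|exact: ltW].
- by move=> i; exact: N_ge0.
- by move=> i; apply: adde_ge0; [exact: N_ge0|rewrite lee_fin ltW].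
Qed.
Lemma real_cauchy (R : realType) (a : nat -> R) :
  (forall e, 0 < e -> exists n0, forall m n, (n0 <= m)%N -> (n0 <= n)%N -> `|a m - a n| < e) ->
  exists l, forall e, 0 < e -> exists n0, forall n, (n0 <= n)%N -> `|a n - l| < e.
Proof.
move=> Ha.
have : cvg (a @ \oo).
  apply/cauchy_cvgP; apply: cauchy_exP => e e0.
  have [n0 Hn0] := Ha e e0.
  exists (a n0); exists n0 => // n /= nn0.
  by rewrite /ball /= Hn0.
move=> /cvgrPdist_lt Hl; exists (lim (a @ \oo)) => e e0.
have [n0 _ Hn0] := Hl e e0.
by exists n0 => n nn0; rewrite distrC; exact: Hn0.
Qed.

Lemma esum2 (R : realType) (f : nat -> \bar R) :
  (forall i, (0 <= f i)%E) -> (forall i, (2 <= i)%N -> f i = 0%E) ->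
  \esum_(i in [set: nat]) f i = (f 0%N + f 1%N)%E.
Proof.
move=> f0 f2; rewrite -nneseries_esumT// (nneseries_split 0 2)//.
rewrite eseries0// ?adde0; last by move=> i i2 _; exact: f2.
by rewrite add0n !big_nat_recr//= big_geq// add0e.
Qed.

Lemma N_tri (R : realType) (I : choiceType) (theta q : R) (phi : nat * I -> I)
  (psi : I -> option (nat * I)) (y z : I -> R) :
  pcancel phi psi -> ocancel psi phi -> 0 <= theta -> 1 <= q ->
  (small_leb_norm theta q (fun k => (y k + z k)%R) <=
   small_leb_norm theta q y + small_leb_norm theta q z)%E.
Proof.
move=> pc oc th0 q1.
pose w (i : nat) : I -> R := if i == 0%N then y else if i == 1%N then z else (fun _ => 0).
have := @CS R I theta q phi psi (fun k => y k + z k) w pc oc th0 q1.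
rewrite esum2; first last.
- by case=> [|[|i]]// _; rewrite /w /= N0.
- by move=> i; exact: N_ge0.
apply => k; rewrite esum2; first last.
- by case=> [|[|i]]// _; rewrite /w /= normr0.
- by move=> i; rewrite lee_fin.
by rewrite /w /= -EFinD lee_fin ler_normD.
Qed.

Fixpoint mmax (M : nat -> nat) (i : nat) : nat :=
  if i is i'.+1 then maxn (mmax M i') (M i) else M 0%N.

Lemma mmax_ge M i : (M i <= mmax M i)%N.
Proof. by case: i => [|i] //=; rewrite leq_maxr. Qed.

Lemma mmax_S M i : (mmax M i <= mmax M i.+1)%N.
Proof. by rewrite /= leq_maxl. Qed.

Lemma N_complete (R : realType) (I : choiceType) (theta q : R) (phi : nat * I -> I)
  (psi : I -> option (nat * I)) (u : nat -> I -> R) :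
  pcancel phi psi -> ocancel psi phi -> 0 <= theta -> 1 <= q ->
  (forall n, (small_leb_norm theta q (u n) < +oo)%E) ->
  (forall e : R, 0 < e -> exists n0 : nat, forall m n : nat,
        (n0 <= m)%N -> (n0 <= n)%N ->
        (small_leb_norm theta q (fun k => (u m k - u n k)%R) < e%:E)%E) ->
  exists y, (small_leb_norm theta q y < +oo)%E /\
       (forall e : R, 0 < e -> exists n0 : nat, forall n : nat,
        (n0 <= n)%N -> (small_leb_norm theta q (fun k => (u n k - y k)%R) < e%:E)%E).
Proof.
move=> pc oc th0 q1 Vu Hc.
pose c := expR (- (theta / q)).
have c0 : 0 < c := expR_gt0 _.
have pck k : forall e, 0 < e -> exists n0, forall m n, (n0 <= m)%N -> (n0 <= n)%N ->
    `|u m k - u n k| < e.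
  move=> e e0; have [n0 Hn0] := Hc (c * e) (mulr_gt0 c0 e0).
  exists n0 => m n hm hn.
  have h := @N_LB R I theta q (fun k => (u m k - u n k)%R) k th0 q1.
  by have := le_lt_trans h (Hn0 m n hm hn); rewrite lte_fin ltr_pM2l.
have [y Hy] := choice (fun k => @real_cauchy R _ (pck k)).
have main : forall e, 0 < e -> exists n0, forall n, (n0 <= n)%N ->
    (small_leb_norm theta q (fun k => (u n k - y k)%R) <= e%:E)%E.
  move=> e e0.
  pose ei i := e / (2 ^ i.+1)%:R.
  have ei0 i : 0 < ei i by rewrite divr_gt0// ltr0n expn_gt0.
  have [M HM] := choice (fun i => Hc (ei i) (ei0 i)).
  exists (mmax M 0%N) => n hn.
  pose a i := if i == 0%N then n else (mmax M i + i)%N.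
  have aM i : (M i <= a i)%N /\ (M i <= a i.+1)%N.
    split.
      rewrite /a; case: eqP => [->//|_].
      exact: leq_trans (mmax_ge M i) (leq_addr _ _).
    rewrite /a /=; apply: leq_trans (mmax_ge M i) _.
    by apply: leq_trans (mmax_S M i) (leq_addr _ _).
  pose w i k := u (a i) k - u (a i.+1) k.
  have Nw i : (small_leb_norm theta q (w i) < (ei i)%:E)%E.
    exact: (HM i _ _ (aM i).1 (aM i).2).
  have tele J k : u n k - u (a J) k = \sum_(0 <= i < J) w i k.
    elim: J => [|J IH]; first by rewrite big_geq// /a /= subrr.
    by rewrite big_nat_recr//= -IH /w addrA subrK.
  have Hpt k : (`|u n k - y k|%:E <= \esum_(i in [set: nat]) (`|w i k|)%:E)%E.
    apply/lee_addgt0Pr => d d0.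
    have [N1 HN1] := Hy k d d0.
    have aJ : (N1 <= a N1)%N.
      by rewrite /a; case: eqP => [->//|_]; rewrite leq_addl.
    have h1 := HN1 _ aJ.
    have h2 : ((\sum_(0 <= i < N1) `|w i k|)%:E <=
               \esum_(i in [set: nat]) (`|w i k|)%:E)%E.
      rewrite -nneseries_esumT// -sumEFin.
      by apply: nneseries_lim_ge => i _ _; rewrite lee_fin.
    have h3 : `|u n k - y k| <= \sum_(0 <= i < N1) `|w i k| + d.
      have -> : u n k - y k = (u n k - u (a N1) k) + (u (a N1) k - y k).
        by rewrite addrA subrK.
      apply: le_trans (ler_normD _ _) _.
      apply: lerD; last exact: ltW.
      by rewrite tele; apply: ler_norm_sum.
    apply: le_trans (_ : _ <= ((\sum_(0 <= i < N1) `|w i k|) + d)%:E)%E _.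
      by rewrite lee_fin.
    by rewrite EFinD leeD2r.
  have := @CS R I theta q phi psi (fun k => (u n k - y k)%R) w pc oc th0 q1 Hpt.
  move/le_trans; apply.
  apply: (@le_trans _ _ (\esum_(i in [set: nat]) (ei i)%:E)).
    by apply: le_esum => i _; apply: ltW.
  rewrite -nneseries_esumT; last by move=> i; rewrite lee_fin ltW.
  exact: epsilon_trick0 (ltW e0).
exists y; split.
  have [n0 Hn0] := main 1 ltr01.
  have h := Hn0 n0 (leqnn _).
  have -> : y = (fun k => u n0 k + (- (u n0 k - y k))).
    by apply/funext => k; rewrite opprB addrC subrK.
  apply: le_lt_trans (@N_tri R I theta q phi psi _ _ pc oc th0 q1) _.
  rewrite (@N_abs R I theta q (fun k => - (u n0 k - y k)) (fun k => u n0 k - y k)); last first.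
    by move=> k; rewrite normrN.
  by apply: lte_add_pinfty => //; apply: le_lt_trans h _; rewrite ltry.
move=> e e0; have e2 : 0 < e / 2 by rewrite divr_gt0.
have [n0 Hn0] := main _ e2; exists n0 => n hn.
apply: le_lt_trans (Hn0 n hn) _; rewrite lte_fin; lra.
Qed.

Lemma N_hom (R : realType) (I : choiceType) (theta q : R) (c : R) (y : I -> R) :
  1 <= q ->
  small_leb_norm theta q (fun k => (c * y k)%R) = (`|c|%:E * small_leb_norm theta q y)%E.
Proof.
move=> q1; have [->|cn0] := eqVneq c 0.
  rewrite (_ : (fun k => 0 * y k) = fun _ => 0); last by apply/funext => k; rewrite mul0r.
  by rewrite N0// normr0 mul0e.
rewrite (@N_abs R I theta q _ (fun k => `|c| * y k)); last first.
  by move=> k; rewrite !normrM normr_id.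
by rewrite N_Z// normr_gt0.
Qed.

Lemma banach_gen (R : realType) (I : choiceType) (theta q : R) (phi : nat * I -> I)
  (psi : I -> option (nat * I)) :
  pcancel phi psi -> ocancel psi phi -> 0 < theta -> 1 <= q ->
  banach_seq_space (small_leb_norm (I:=I) theta q).
Proof.
move=> pc oc th0' q1; have th0 := ltW th0'.
rewrite /banach_seq_space /=; split; first by rewrite N0// ltry.
split.
  move=> y z Vy Vz; apply: le_lt_trans (@N_tri R I theta q phi psi _ _ pc oc th0 q1) _.
  exact: lte_add_pinfty.
split.
  move=> c y Vy; rewrite N_hom//.
  have Nf : small_leb_norm theta q y \is a fin_num by rewrite ge0_fin_numE ?N_ge0.
  by rewrite ltey_eq fin_numM.
split; first by move=> y _; exact: N_ge0.
split.
  move=> y _; split => [h|->]; last exact: N0.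
  apply/funext => k; have := @N_LB R I theta q y k th0 q1.
  rewrite h lee_fin pmulr_rle0 ?expR_gt0// normr_le0 => /eqP //.
split; first by move=> c y _; exact: N_hom.
split; first by move=> y z _ _; exact: (@N_tri R I theta q phi psi _ _ pc oc th0 q1).
move=> u Vu Hc; exact: (@N_complete R I theta q phi psi u pc oc th0 q1 Vu Hc).
Qed.

Local Close Scope classical_set_scope.

(* X = N or N0 (both indexed by nat) and X = Z (indexed by int) *)
Theorem theorem3p5 (R : realType) (theta q : R) :
  0 < theta -> 1 <= q ->
  banach_seq_space (small_leb_norm (I := nat) theta q) /\
  banach_seq_space (small_leb_norm (I := int) theta q).
Proof.
move=> th0 q1; split.
  exact: (@banach_gen R nat theta q pickle pickle_inv pickleK_inv pickle_invK th0 q1).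
pose phi (p : nat * int) : int := Posz (pickle p).
pose psi (j : int) : option (nat * int) :=
  match j with Posz n => pickle_inv n | Negz _ => None end.
apply: (@banach_gen R int theta q phi psi _ _ th0 q1).
  by move=> p; rewrite /psi /phi pickleK_inv.
case=> [n|n] //=; rewrite /psi /phi; case E: (pickle_inv n) => [p|] //=.
by have := @pickle_invK (nat * int)%type n; rewrite E /= => ->.
Qed.
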